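(* Let $k$ be a field with $\operatorname{char}(k)\nmid(d+1)!$, $V$ an $n$-dimensional $k$-vector space, $S=\operatorname{Sym}V$. Let $f\in S_{d+1}$ satisfy $\dim_k\langle\nabla f\rangle=n$. Then $f$ is a direct sum if and only if $\nabla f\in\operatorname{Grass}(n,S_d)$ is a direct sum if and only if $\nabla f\in\operatorname{Grass}(n,S_d)$ is a balanced direct sum.
   Context: For $f\in S_{d+1}$ and a basis $x_1,\dots,x_n$ of $V$, $\langle\nabla f\rangle$ is the $k$-span of $\partial f/\partial x_1,\dots,\partial f/\partial x_n$ in $S_d$, and when this has dimension $n$, $\nabla f$ is the corresponding point of $\operatorname{Grass}(n,S_d)$. A form $f$ is a direct sum if there is a decomposition $V=U\oplus W$ and nonzero $f_1\in\operatorname{Sym}^{d+1}U$, $f_2\in\operatorname{Sym}^{d+1}W$ with $f=f_1+f_2$. An $m$-dimensional subspace $L\subset\operatorname{Sym}^dV$ is a direct sum if there is a non-trivial decomposition $V=U\oplus W$ and subspaces $L_1\subset\operatorname{Sym}^dU$, $L_2\subset\operatorname{Sym}^dW$ of dimensions $m_1+m_2=m$ with $L=L_1+L_2$; it is a balanced direct sum if moreover $m_1=\dim_kU$, $m_2=\dim_kW$. *)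

(* Defs.v *)
From mathcomp Require Import all_boot all_algebra.
From mathcomp Require Import mpoly.
Set Implicit Arguments. Unset Strict Implicit. Unset Printing Implicit Defensive.
Import GRing.Theory.
Local Open Scope ring_scope.

(* Conventions: V = k^n, realised as row vectors 'rV[k]_n; the basis
   x_1..x_n of V is the standard basis, and S = Sym V = {mpoly k[n]},
   with x_i = 'X_i. *)

Definition linform (k : fieldType) (n : nat) (v : 'rV[k]_n) : {mpoly k[n]} :=
  \sum_(i < n) v 0 i *: 'X_i.

(* Sym^m U inside Sym^m V, for a subspace U of V: homogeneous polynomials of
   degree m lying in the subalgebra k[u_1,...,u_r] generated by a basis of U. *)
Definition SymU (k : fieldType) (n : nat) (U : {vspace 'rV[k]_n}) (m : nat)
    (p : {mpoly k[n]}) : Prop :=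
  p \is m.-homog /\
  exists q : {mpoly k[\dim U]},
    p = q \mPo [tuple linform (tnth (vbasis U) i) | i < \dim U].

Definition vdecomp (k : fieldType) (n : nat) (U W : {vspace 'rV[k]_n}) : Prop :=
  (U + W)%VS = fullv /\ (U :&: W)%VS = 0%VS.

Definition form_direct_sum (k : fieldType) (n e : nat) (f : {mpoly k[n]}) : Prop :=
  exists U W : {vspace 'rV[k]_n}, vdecomp U W /\
  exists f1 f2 : {mpoly k[n]},
    [/\ f1 != 0, f2 != 0, SymU U e f1, SymU W e f2 & f = f1 + f2].

(* Finite-dimensional subspaces of S given by finite spanning sequences. *)
Definition inspan (k : fieldType) (n : nat) (s : seq {mpoly k[n]}) (p : {mpoly k[n]}) : Prop :=
  exists c : 'I_(size s) -> k, p = \sum_(i < size s) c i *: s`_i.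

Definition lin_free (k : fieldType) (n : nat) (s : seq {mpoly k[n]}) : Prop :=
  forall c : 'I_(size s) -> k,
    \sum_(i < size s) c i *: s`_i = 0 -> forall i, c i = 0.

Definition same_span (k : fieldType) (n : nat) (s t : seq {mpoly k[n]}) : Prop :=
  forall p, inspan s p <-> inspan t p.

Definition span_dim (k : fieldType) (n : nat) (s : seq {mpoly k[n]}) (m : nat) : Prop :=
  exists b : seq {mpoly k[n]}, [/\ lin_free b, size b = m & same_span b s].

Definition space_direct_sum (k : fieldType) (n : nat) (bal : bool) (e : nat)
    (G : seq {mpoly k[n]}) (m : nat) : Prop :=
  exists U W : {vspace 'rV[k]_n},
    [/\ vdecomp U W, U != 0%VS & W != 0%VS] /\
  exists b1 b2 : seq {mpoly k[n]},
    [/\ lin_free b1, lin_free b2,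
        (forall p, p \in b1 -> SymU U e p),
        (forall p, p \in b2 -> SymU W e p) &
        [/\ (size b1 + size b2)%N = m,
            same_span G (b1 ++ b2) &
            (bal -> size b1 = \dim U /\ size b2 = \dim W)]].

Definition grad (k : fieldType) (n : nat) (f : {mpoly k[n]}) : seq {mpoly k[n]} :=
  [seq mderiv i f | i <- enum 'I_n].

(* Main.v *)
Require Import Defs.
From mathcomp Require Import all_boot all_algebra.
From mathcomp Require Import mpoly.
From mathcomp Require Import ring.
From mathcomp Require Import zify.
Set Implicit Arguments. Unset Strict Implicit. Unset Printing Implicit Defensive.
Import GRing.Theory.
Local Open Scope ring_scope.

Section Basic.
Variable k : fieldType.
Variable n : nat.
Local Notation P := {mpoly k[n]}.

Lemma mderiv_homog m (p : P) i : p \is m.-homog -> mderiv i p \is m.-1.-homog.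
Proof.
move=> hp; apply/dhomogP => mm; rewrite mcoeff_msupp mcoeff_mderiv.
have [->|nz] := eqVneq (p@_(mm + U_(i))%MM) 0; first by rewrite mul0rn eqxx.
move=> _; have := dhomog_mf hp; move/(_ (mm + U_(i))%MM).
rewrite mcoeff_msupp nz => /(_ isT) /= <-.
by rewrite mdegD mdeg1 addn1.
Qed.

Lemma homog0_const (p : P) : p \is 0.-homog -> p = (p@_0%MM)%:MP.
Proof.
move=> hp; apply/mpolyP => mm; rewrite mcoeffC.
have [->|ne] := eqVneq mm 0%MM; first by rewrite mulr1.
rewrite mulr0; apply: (dhomog_nemf_coeff hp).
by rewrite mdeg_eq0.
Qed.

Lemma const_homog_eq0 m (c : k) : (0 < m)%N -> (c%:MP : P) \is m.-homog -> c = 0 :> k.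
Proof.
move=> m0 h; have := @dhomog_nemf_coeff n k (@mdeg n) m _ 0%MM h.
rewrite mcoeffC eqxx mulr1; apply => /=; by rewrite mdeg0 eq_sym -lt0n.
Qed.

Lemma euler_mono (mm : 'X_{1..n}) :
  \sum_(i < n) 'X_i * mderiv i ('X_[mm] : P) = (mdeg mm)%:R *: 'X_[mm].
Proof.
rewrite mdegE natr_sum scaler_suml; apply: eq_bigr => i _.
rewrite mderivX -scalerAr -mpolyXD.
have [z|nz] := eqVneq (mm i) 0%N; first by rewrite z !scale0r.
by rewrite addmC submK // lep1mP.
Qed.

Lemma euler m (p : P) : p \is m.-homog ->
  \sum_(i < n) 'X_i * mderiv i p = m%:R *: p.
Proof.
move=> hp; rewrite [p]mpolyE scaler_sumr.
under eq_bigr do rewrite raddf_sum mulr_sumr.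
rewrite exchange_big /= big_seq [RHS]big_seq; apply: eq_bigr => mm hm.
under eq_bigr do rewrite mderivZ -scalerAr.
rewrite -scaler_sumr euler_mono (dhomog_mf hp hm) scalerA mulrC -scalerA //.
Qed.

Lemma linform_homog (v : 'rV[k]_n) : linform v \is 1.-homog.
Proof.
rewrite /linform rpred_sum // => i _; apply: rpredZ.
by rewrite dhomogX /= mdeg1.
Qed.

End Basic.

Section Chain.
Variable k : fieldType.
Variables n r : nat.
Variable t : r.-tuple {mpoly k[n]}.

Definition chainP (q : {mpoly k[r]}) := forall i,
  mderiv i (q \mPo t) = \sum_(j < r) (mderiv j q \mPo t) * mderiv i t`_j.

Lemma chain_lin c p q : chainP p -> chainP q -> chainP (c *: p + q).
Proof.
move=> hp hq i; rewrite comp_mpolyD comp_mpolyZ mderivD mderivZ hp hq.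
rewrite scaler_sumr -big_split /=; apply: eq_bigr => j _.
by rewrite mderivD mderivZ comp_mpolyD comp_mpolyZ mulrDl scalerAl.
Qed.

Lemma chain_mul p q : chainP p -> chainP q -> chainP (p * q).
Proof.
move=> hp hq i; rewrite rmorphM /= mderivM hp hq mulr_suml mulr_sumr.
rewrite -big_split /=; apply: eq_bigr => j _.
rewrite mderivM rmorphD /= !rmorphM /= mulrDl.
by congr (_ + _); rewrite -!mulrA; congr (_ * _); rewrite mulrC.
Qed.

Lemma chain1 : chainP 1.
Proof.
move=> i; rewrite comp_mpoly1 mderivC big1 // => j _.
by rewrite -(mpolyC1) mderivC comp_mpoly0 mul0r.
Qed.

Lemma chainX (j : 'I_r) : chainP 'X_j.
Proof.
move=> i; rewrite comp_mpolyXU (bigD1 j) //= mderivX mnm1E eqxx.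
have -> : (U_(j) - U_(j) = 0)%MM by apply/mnmP=> l; rewrite !mnmE subnn.
rewrite mpolyX0 scale1r comp_mpoly1 mul1r big1 ?addr0 // => l lj.
rewrite mderivX mnm1E eq_sym (negbTE lj) scale0r comp_mpoly0 mul0r //.
Qed.

Lemma chain_all q : chainP q.
Proof.
elim/mpolyind: q => [|c m p _ _ hp].
  by move=> i; rewrite comp_mpoly0 mderiv0 big1 // => j _; rewrite mderiv0 comp_mpoly0 mul0r.
apply: chain_lin => //; rewrite mpolyXE_id.
apply: (big_ind chainP) => //; first exact: chain1.
  exact: chain_mul.
move=> j _; elim: (m j) => [|e ih]; first by rewrite expr0; exact: chain1.
by rewrite exprS; apply: chain_mul => //; exact: chainX.
Qed.

End Chain.

Section Deriv.
Variable k : fieldType.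
Variable n : nat.
Local Notation P := {mpoly k[n]}.
Local Notation V := 'rV[k]_n.
Implicit Types (u v c x : V) (p q : P).

Definition ev (i : 'I_n) : V := delta_mx 0 i.
Definition dot (u v : V) : k := \sum_i u 0 i * v 0 i.
Definition Dv (c : V) (p : P) : P := \sum_i c 0 i *: mderiv i p.
Definition E (s : V -> V) (p : P) : P := \sum_i linform (s (ev i)) * mderiv i p.
Definition colv (s : V -> V) (j : 'I_n) : V := \row_i (s (ev i)) 0 j.

Lemma mderiv_sum i I (r : seq I) (F : I -> P) :
  mderiv i (\sum_(x <- r) F x) = \sum_(x <- r) mderiv i (F x).
Proof. by elim/big_rec2: _ => [|x a b _ <-]; rewrite ?mderiv0 ?mderivD. Qed.

Lemma Dv_ev i p : Dv (ev i) p = mderiv i p.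
Proof.
rewrite /Dv (bigD1 i) //= big1 ?addr0; first by rewrite mxE !eqxx scale1r.
by move=> j ji; rewrite mxE eqxx /= (negbTE ji) scale0r.
Qed.

Lemma DvD c p q : Dv c (p + q) = Dv c p + Dv c q.
Proof. by rewrite /Dv -big_split; apply: eq_bigr => i _; rewrite mderivD scalerDr. Qed.
Lemma DvZ c a p : Dv c (a *: p) = a *: Dv c p.
Proof. by rewrite /Dv scaler_sumr; apply: eq_bigr => i _; rewrite mderivZ !scalerA mulrC. Qed.
Lemma Dv0 c : Dv c 0 = 0.
Proof. by rewrite /Dv big1 // => i _; rewrite mderiv0 scaler0. Qed.
Lemma DvN c p : Dv c (- p) = - Dv c p.
Proof. by rewrite -scaleN1r DvZ scaleN1r. Qed.
Lemma DvB c p q : Dv c (p - q) = Dv c p - Dv c q.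
Proof. by rewrite DvD DvN. Qed.
Lemma Dv_sum I (r : seq I) (F : I -> P) c :
  Dv c (\sum_(x <- r) F x) = \sum_(x <- r) Dv c (F x).
Proof. by elim/big_rec2: _ => [|x a b _ <-]; rewrite ?Dv0 ?DvD. Qed.
Lemma DvM c p q : Dv c (p * q) = Dv c p * q + p * Dv c q.
Proof.
rewrite /Dv mulr_suml mulr_sumr -big_split; apply: eq_bigr => i _ /=.
by rewrite mderivM scalerDr -scalerAl -scalerAr.
Qed.

Lemma Dv_addv c1 c2 p : Dv (c1 + c2) p = Dv c1 p + Dv c2 p.
Proof. by rewrite /Dv -big_split; apply: eq_bigr => i _; rewrite mxE scalerDl. Qed.
Lemma Dv_scalev a c p : Dv (a *: c) p = a *: Dv c p.
Proof. by rewrite /Dv scaler_sumr; apply: eq_bigr => i _; rewrite mxE scalerA. Qed.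

Lemma mderiv_Dv i c p : mderiv i (Dv c p) = Dv c (mderiv i p).
Proof.
rewrite /Dv mderiv_sum; apply: eq_bigr => j _ /=.
by rewrite mderivZ mderiv_comm.
Qed.

Lemma Dv_comm c c' p : Dv c (Dv c' p) = Dv c' (Dv c p).
Proof.
rewrite /Dv; under eq_bigr do rewrite mderiv_sum scaler_sumr.
under [RHS]eq_bigr do rewrite mderiv_sum scaler_sumr.
rewrite exchange_big; apply: eq_bigr => i _; apply: eq_bigr => j _ /=.
by rewrite !mderivZ !scalerA mderiv_comm mulrC.
Qed.

Lemma Dv_homog m c p : p \is m.-homog -> Dv c p \is m.-1.-homog.
Proof. by move=> hp; rewrite rpred_sum // => i _; rewrite rpredZ // mderiv_homog. Qed.

Lemma linformD u v : linform (u + v) = linform u + linform v.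
Proof. by rewrite /linform -big_split; apply: eq_bigr => i _; rewrite mxE scalerDl. Qed.
Lemma linformZ a u : linform (a *: u) = a *: linform u.
Proof. by rewrite /linform scaler_sumr; apply: eq_bigr => i _; rewrite mxE scalerA. Qed.
Lemma linform0 : linform (0 : V) = 0.
Proof. by rewrite /linform big1 // => i _; rewrite mxE scale0r. Qed.
Lemma linform_sum I (r : seq I) (F : I -> V) :
  linform (\sum_(x <- r) F x) = \sum_(x <- r) linform (F x).
Proof. by elim/big_rec2: _ => [|x a b _ <-]; rewrite ?linform0 ?linformD. Qed.
Lemma linform_ev i : linform (ev i) = 'X_i.
Proof.
rewrite /linform (bigD1 i) //= big1 ?addr0; first by rewrite mxE !eqxx scale1r.
by move=> j ji; rewrite mxE eqxx /= (negbTE ji) scale0r.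
Qed.

Lemma mderiv_linform i u : mderiv i (linform u) = (u 0 i)%:MP.
Proof.
have h : (U_(i) - U_(i) = 0 :> 'X_{1..n})%MM by apply/mnmP=> l; rewrite !mnmE subnn.
rewrite /linform mderiv_sum (bigD1 i) //= big1 ?addr0.
  by rewrite mderivZ mderivX mnm1E eqxx h mpolyX0 scale1r -mul_mpolyC mulr1.
move=> j ji; rewrite mderivZ mderivX mnm1E (negbTE ji) scale0r scaler0 //.
Qed.

Lemma Dv_linform c u : Dv c (linform u) = (dot u c)%:MP.
Proof.
rewrite /Dv /dot rmorph_sum; apply: eq_bigr => i _ /=.
by rewrite mderiv_linform -mul_mpolyC -rmorphM mulrC.
Qed.

Lemma dotD u v c : dot (u + v) c = dot u c + dot v c.
Proof. by rewrite /dot -big_split; apply: eq_bigr => i _; rewrite mxE mulrDl. Qed.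
Lemma dotZ a u c : dot (a *: u) c = a * dot u c.
Proof. by rewrite /dot mulr_sumr; apply: eq_bigr => i _; rewrite mxE mulrA. Qed.
Lemma dot0 c : dot 0 c = 0.
Proof. by rewrite /dot big1 // => i _; rewrite mxE mul0r. Qed.
Lemma dot_sum I (r : seq I) (F : I -> V) c :
  dot (\sum_(x <- r) F x) c = \sum_(x <- r) dot (F x) c.
Proof. by elim/big_rec2: _ => [|x a b _ <-]; rewrite ?dot0 ?dotD. Qed.

Lemma Dv_row c p : Dv c p = \sum_i c 0 i *: mderiv i p.
Proof. by []. Qed.

Lemma lin0 (s : V -> V) : linear s -> s 0 = 0.
Proof.
move=> hs; have h := hs 1 0 0; rewrite !scale1r addr0 in h.
by apply: (addrI (s 0)); rewrite -h addr0.
Qed.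
Lemma linD (s : V -> V) : linear s -> forall x y, s (x + y) = s x + s y.
Proof. by move=> hs x y; have := hs 1 x y; rewrite !scale1r. Qed.
Lemma linZ (s : V -> V) : linear s -> forall a x, s (a *: x) = a *: s x.
Proof. by move=> hs a x; have := hs a x 0; rewrite addr0 (lin0 hs) addr0. Qed.
Lemma lin_sum (s : V -> V) I (r : seq I) (F : I -> V) : linear s ->
  s (\sum_(x <- r) F x) = \sum_(x <- r) s (F x).
Proof. by move=> hs; elim/big_rec2: _ => [|x a b _ <-]; rewrite ?lin0 ?linD. Qed.

Lemma lin_expand (s : V -> V) x : linear s -> s x = \sum_i x 0 i *: s (ev i).
Proof.
move=> hs; rewrite {1}[x]row_sum_delta lin_sum //.
by apply: eq_bigr => i _; rewrite linZ.
Qed.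

Lemma dot_colv (s : V -> V) u j : linear s -> dot u (colv s j) = (s u) 0 j.
Proof.
move=> hs; rewrite (lin_expand u hs) /dot summxE; apply: eq_bigr => i _.
by rewrite !mxE.
Qed.

Lemma E_idem (s : V -> V) p : linear s -> (forall x, s (s x) = s x) ->
  E s p = \sum_j linform (s (ev j)) * Dv (colv s j) p.
Proof.
move=> hs hss; rewrite /E /Dv.
under [RHS]eq_bigr do rewrite mulr_sumr.
rewrite exchange_big /=; apply: eq_bigr => i _.
under eq_bigr do rewrite mxE -scalerAr scalerAl.
rewrite -mulr_suml; congr (_ * _).
rewrite -{1}[s (ev i)]hss (lin_expand (s (ev i)) hs) linform_sum.
by apply: eq_bigr => j _; rewrite linformZ.
Qed.

Lemma E_split (A B : V -> V) p : linear A -> linear B ->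
  (forall x, A x + B x = x) ->
  E A p + E B p = \sum_i 'X_i * mderiv i p.
Proof.
move=> hA hB hAB; rewrite /E -big_split; apply: eq_bigr => i _ /=.
by rewrite -mulrDl -linformD hAB linform_ev.
Qed.

Lemma E_homog (s : V -> V) m p : p \is m.+1.-homog -> E s p \is m.+1.-homog.
Proof.
move=> hp; rewrite rpred_sum // => i _.
have -> : m.+1 = (1 + m)%N by [].
by apply: dhomogM; [exact: linform_homog | exact: mderiv_homog hp].
Qed.

Lemma ev_colv (A B : V -> V) j : linear A -> linear B ->
  (forall x, A x + B x = x) -> ev j = colv A j + colv B j.
Proof.
move=> hA hB hAB; apply/rowP => i.
have h := congr1 (fun r : V => r 0 j) (hAB (ev i)); rewrite /= mxE in h.
rewrite [RHS]mxE [X in _ = X + _]mxE [X in _ = _ + X]mxE h /ev !mxE.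
by rewrite eq_sym.
Qed.

End Deriv.
Arguments ev {k n} i.

Section InK.
Variable k : fieldType.
Variable n : nat.
Local Notation P := {mpoly k[n]}.
Local Notation V := 'rV[k]_n.
Implicit Types (u v c x : V) (p q : P).
Variable U : {vspace V}.

Definition tU := [tuple linform (tnth (vbasis U) i) | i < \dim U].
Definition inK p := exists q : {mpoly k[\dim U]}, p = q \mPo tU.

Lemma SymUE m p : SymU U m p <-> p \is m.-homog /\ inK p.
Proof. by []. Qed.

Lemma inK0 : inK 0.
Proof. by exists 0; rewrite comp_mpoly0. Qed.
Lemma inKC a : inK a%:MP.
Proof. by exists a%:MP; rewrite comp_mpolyC. Qed.
Lemma inKD p q : inK p -> inK q -> inK (p + q).
Proof. by move=> [p' ->] [q' ->]; exists (p' + q'); rewrite comp_mpolyD. Qed.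
Lemma inKZ a p : inK p -> inK (a *: p).
Proof. by move=> [p' ->]; exists (a *: p'); rewrite comp_mpolyZ. Qed.
Lemma inKM p q : inK p -> inK q -> inK (p * q).
Proof. by move=> [p' ->] [q' ->]; exists (p' * q'); rewrite rmorphM. Qed.
Lemma inKN p : inK p -> inK (- p).
Proof. by move=> h; rewrite -scaleN1r; apply: inKZ. Qed.
Lemma inKB p q : inK p -> inK q -> inK (p - q).
Proof. by move=> hp hq; apply: inKD => //; apply: inKN. Qed.
Lemma inK_sum I (r : seq I) (F : I -> P) :
  (forall i, inK (F i)) -> inK (\sum_(i <- r) F i).
Proof. by move=> h; elim/big_rec: _ => [|i x _ hx]; [exact: inK0 | exact: inKD]. Qed.

Lemma tU_nth (j : 'I_(\dim U)) : tU`_j = linform (vbasis U)`_j.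
Proof. by rewrite /tU nth_mktuple (tnth_nth 0). Qed.

Lemma vbasis_nth_mem (j : 'I_(\dim U)) : (vbasis U)`_j \in U.
Proof. by apply: vbasis_mem; apply: mem_nth; rewrite size_tuple. Qed.

Lemma inK_linform u : u \in U -> inK (linform u).
Proof.
move=> hu; exists (\sum_(j < \dim U) coord (vbasis U) j u *: 'X_j).
rewrite raddf_sum /= {1}(coord_vbasis hu) linform_sum; apply: eq_bigr => j _.
by rewrite comp_mpolyZ comp_mpolyXU tU_nth linformZ.
Qed.

Lemma Dv_comp c (q : {mpoly k[\dim U]}) :
  Dv c (q \mPo tU) = \sum_(j < \dim U) (mderiv j q \mPo tU) * (dot (vbasis U)`_j c)%:MP.
Proof.
rewrite /Dv; under eq_bigr do rewrite (chain_all tU q) scaler_sumr.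
rewrite exchange_big /=; apply: eq_bigr => j _.
rewrite tU_nth; under eq_bigr do rewrite mderiv_linform scalerAr.
rewrite -mulr_sumr; congr (_ * _); rewrite /dot rmorph_sum; apply: eq_bigr => i _.
by rewrite -mul_mpolyC -rmorphM [X in _ = X%:MP]mulrC.
Qed.

Lemma inK_Dv c p : inK p -> inK (Dv c p).
Proof.
move=> [q ->]; rewrite Dv_comp; apply: inK_sum => j.
apply: inKM; last exact: inKC.
by exists (mderiv j q).
Qed.

Lemma Dv_ann c p : inK p -> (forall u, u \in U -> dot u c = 0) -> Dv c p = 0.
Proof.
move=> [q ->] hc; rewrite Dv_comp big1 // => j _.
by rewrite hc ?vbasis_nth_mem // mulr0.
Qed.

Lemma inK_dim0 p : \dim U = 0%N -> inK p -> exists a, p = a%:MP.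
Proof.
move=> h0 [q ->]; rewrite comp_mpolyEX.
exists (\sum_(m <- msupp q) q@_m); rewrite rmorph_sum; apply: eq_bigr => m _.
rewrite comp_mpolyX big1 ?scaler1 -?mul_mpolyC ?mulr1 //.
by move=> i _; exfalso; have : (val i < \dim U)%N := ltn_ord i; move: (val i) => x; rewrite h0.
Qed.

Lemma SymU_dim0 m p : \dim U = 0%N -> (0 < m)%N -> SymU U m p -> p = 0.
Proof.
move=> h0 m0 [hh hK]; have [a ha] := inK_dim0 h0 hK.
by move: hh; rewrite ha => hh; rewrite (const_homog_eq0 m0 hh) mpolyC0.
Qed.

End InK.

Section Proj.
Variable k : fieldType.
Variables n d : nat.
Hypothesis hchar : forall p : nat, p \in [pchar k] -> ~~ (p %| (d.+1)`!)%N.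
Local Notation P := {mpoly k[n]}.
Local Notation V := 'rV[k]_n.
Implicit Types (u v c x : V) (p q : P).

Lemma natr_nz j : (0 < j <= d.+1)%N -> (j%:R : k) != 0.
Proof.
move=> /andP[j0 jd]; apply/negP => h.
have [p hp] := natf0_pchar j0 h.
have hj : (j %| (d.+1)`!)%N by apply: dvdn_fact; rewrite j0 jd.
have := hchar hp; rewrite (dvdn_trans _ hj) //.
by rewrite (dvdn_pcharf hp).
Qed.

Lemma zero_partials m p : (0 < m <= d.+1)%N -> p \is m.-homog ->
  (forall i, mderiv i p = 0) -> p = 0.
Proof.
move=> hm hp h0; have := euler hp.
under eq_bigr do rewrite h0 mulr0.
rewrite big1 // => /esym /eqP; rewrite scaler_eq0 (negbTE (natr_nz hm)) /=.
by move/eqP.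
Qed.

Lemma homog1_linform p : p \is 1.-homog ->
  p = linform (\row_i (mderiv i p)@_0%MM).
Proof.
move=> hp; have he := euler hp; rewrite scale1r in he.
rewrite -[in LHS]he.
rewrite /linform; apply: eq_bigr => i _; rewrite mxE.
rewrite {1}(homog0_const (mderiv_homog i hp)).
by rewrite mulrC mul_mpolyC.
Qed.

Definition projpair (U W : {vspace V}) (A B : V -> V) :=
  [/\ linear A, linear B, (forall x, A x + B x = x),
      (forall x, A (A x) = A x) & (forall x, B (B x) = B x)] /\
  [/\ (forall x, A x \in W), (forall x, B x \in U),
      (forall u, u \in U -> A u = 0) & (forall w, w \in W -> B w = 0)].

Lemma projpair_sym U W A B : projpair U W A B -> projpair W U B A.
Proof.
move=> [[hA hB hAB hAA hBB] [hAW hBU hAU hBW]]; split; split => //.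
by move=> x; rewrite addrC.
Qed.

Lemma pp_ann U W A B j u : projpair U W A B -> u \in U -> dot u (colv A j) = 0.
Proof.
move=> [[hA _ _ _ _] [_ _ hAU _]] hu; by rewrite dot_colv // hAU // mxE.
Qed.

Lemma pp_vdecomp U W A B : projpair U W A B -> vdecomp U W.
Proof.
move=> [[hA hB hAB _ _] [hAW hBU hAU hBW]]; split.
  apply/eqP; rewrite eqEsubv subvf /=; apply/subvP => x _.
  by rewrite -(hAB x) addrC memv_add.
apply/eqP; rewrite -subv0; apply/subvP => x /memv_capP [xU xW].
by rewrite memv0 -(hAB x) hAU // hBW // addr0.
Qed.

Lemma pp_inter U W A B m p : projpair U W A B -> (0 < m <= d.+1)%N ->
  p \is m.-homog -> inK U p -> inK W p -> p = 0.
Proof.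
move=> pp hm hp hU hW; apply: (zero_partials hm hp) => j.
have [[hA hB hAB _ _] _] := pp.
rewrite -Dv_ev (ev_colv j hA hB hAB) Dv_addv.
rewrite (Dv_ann hU) ?add0r; last by move=> u hu; apply: pp_ann pp hu.
rewrite (Dv_ann hW) // => w hw; exact: pp_ann (projpair_sym pp) hw.
Qed.

Lemma pp_zero U W A B f : projpair U W A B ->
  (forall c, Dv c f = 0 -> c = 0) -> inK U f -> W = 0%VS.
Proof.
move=> pp hinj hf.
have hc : forall j, colv A j = 0.
  move=> j; apply: hinj; apply: Dv_ann hf _ => u hu; exact: pp_ann pp hu.
have [[hA hB hAB _ _] [hAW hBU hAU hBW]] := pp.
apply/eqP; rewrite -subv0; apply/subvP => w hw; rewrite memv0.
have <- : A w = w by rewrite -[RHS](hAB w) hBW // addr0.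
apply/eqP/rowP => j; rewrite mxE -dot_colv // hc.
by rewrite /dot big1 // => i _; rewrite mxE mulr0.
Qed.

Lemma pp_decomp U W A B f : projpair U W A B -> f \is d.+1.-homog ->
  (forall j, inK W (Dv (colv A j) f)) -> (forall j, inK U (Dv (colv B j) f)) ->
  [/\ SymU U d.+1 ((d.+1)%:R^-1 *: E B f), SymU W d.+1 ((d.+1)%:R^-1 *: E A f)
    & f = (d.+1)%:R^-1 *: E B f + (d.+1)%:R^-1 *: E A f].
Proof.
move=> [[hA hB hAB hAA hBB] [hAW hBU hAU hBW]] hf hAf hBf; split.
- split; first by rewrite rpredZ // E_homog.
  apply: inKZ; rewrite E_idem //; apply: inK_sum => j.
  by apply: inKM; [exact: inK_linform | exact: hBf].
- split; first by rewrite rpredZ // E_homog.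
  apply: inKZ; rewrite E_idem //; apply: inK_sum => j.
  by apply: inKM; [exact: inK_linform | exact: hAf].
rewrite -scalerDr addrC E_split // (euler hf) scalerA mulVf ?scale1r //.
by apply: natr_nz; rewrite /= leqnn.
Qed.

Lemma pp_form U W A B f : projpair U W A B -> f \is d.+1.-homog ->
  U != 0%VS -> W != 0%VS -> (forall c, Dv c f = 0 -> c = 0) ->
  (forall j, inK W (Dv (colv A j) f)) -> (forall j, inK U (Dv (colv B j) f)) ->
  form_direct_sum d.+1 f.
Proof.
move=> pp hf hU hW hinj hAf hBf.
have [h1 h2 hsum] := pp_decomp pp hf hAf hBf.
exists U, W; split; first exact: pp_vdecomp pp.
exists ((d.+1)%:R^-1 *: E B f), ((d.+1)%:R^-1 *: E A f); split => //.
- apply/negP => /eqP h0; move: hsum; rewrite h0 add0r => hfe.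
  have := pp_zero (projpair_sym pp) hinj; rewrite hfe => /(_ h2.2) h.
  by rewrite h eqxx in hU.
- apply/negP => /eqP h0; move: hsum; rewrite h0 addr0 => hfe.
  have := pp_zero pp hinj; rewrite hfe => /(_ h1.2) h.
  by rewrite h eqxx in hW.
Qed.

End Proj.

Section Spans.
Variable k : fieldType.
Variable n : nat.
Local Notation P := {mpoly k[n]}.
Local Notation V := 'rV[k]_n.
Implicit Types (u v c x : V) (p q : P) (s t : seq P).

Lemma inspanE s m (e : size s = m) p :
  inspan s p <-> exists c : 'I_m -> k, p = \sum_(i < m) c i *: s`_i.
Proof. by case: m / e. Qed.

Lemma lin_freeE s m (e : size s = m) :
  lin_free s <-> forall c : 'I_m -> k, \sum_(i < m) c i *: s`_i = 0 -> forall i, c i = 0.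
Proof. by case: m / e. Qed.

Lemma size_grad (f : P) : size (grad f) = n.
Proof. by rewrite size_map size_enum_ord. Qed.

Lemma grad_nth (f : P) (i : 'I_n) : (grad f)`_i = mderiv i f.
Proof.
rewrite /grad (nth_map i) ?size_enum_ord //.
by rewrite (_ : nth i _ _ = i) // nth_ord_enum.
Qed.

Lemma lin_free_grad_inj (f : P) : lin_free (grad f) -> forall c, Dv c f = 0 -> c = 0.
Proof.
move/(lin_freeE (size_grad f)) => h c hc; apply/rowP => i; rewrite mxE.
apply: (h (fun j => c 0 j)); rewrite -[RHS]hc /Dv; apply: eq_bigr => j _.
by rewrite grad_nth.
Qed.

Lemma inspan_grad_Dv (f : P) c : inspan (grad f) (Dv c f).
Proof.
apply/(inspanE (size_grad f)); exists (fun j => c 0 j); apply: eq_bigr => j _.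
by rewrite grad_nth.
Qed.

Lemma inspan_self s i : (i < size s)%N -> inspan s s`_i.
Proof.
move=> hi; exists (fun j => (val j == i)%:R).
rewrite (bigD1 (Ordinal hi)) //= eqxx scale1r big1 ?addr0 // => j hj.
by rewrite (_ : (val j == i) = false) ?scale0r //; apply/negbTE; move: hj; apply: contra => /eqP h; apply/eqP/val_inj.
Qed.

Lemma inspan_mem s p : p \in s -> inspan s p.
Proof. by move=> hp; rewrite -(nth_index 0 hp); apply: inspan_self; rewrite index_mem. Qed.

Lemma inspan_cat s t p : inspan (s ++ t) p ->
  exists g h, [/\ inspan s g, inspan t h & p = g + h].
Proof.
move/(inspanE (size_cat s t)) => [c ->]; rewrite big_split_ord /=.
exists (\sum_(i < size s) c (lshift (size t) i) *: (s ++ t)`_(lshift (size t) i)).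
exists (\sum_(i < size t) c (rshift (size s) i) *: (s ++ t)`_(rshift (size s) i)).
split => //.
- exists (fun i => c (lshift (size t) i)); apply: eq_bigr => i _.
  by rewrite /= nth_cat ltn_ord.
- exists (fun i => c (rshift (size s) i)); apply: eq_bigr => i _.
  by rewrite /= nth_cat ltnNge leq_addr /= addKn.
Qed.

Lemma inspan_sub s t p : (forall y : P, y \in s -> inspan t y) -> inspan s p -> inspan t p.
Proof.
move=> hst [c ->].
have h0 : inspan t 0 by exists (fun _ => 0); rewrite big1 // => i _; rewrite scale0r.
have hD : forall a b, inspan t a -> inspan t b -> inspan t (a + b).
  move=> a b [ca ->] [cb ->]; exists (fun i => ca i + cb i).
  by rewrite -big_split; apply: eq_bigr => i _; rewrite scalerDl.
have hZ : forall a b, inspan t b -> inspan t (a *: b).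
  move=> a b [cb ->]; exists (fun i => a * cb i).
  by rewrite scaler_sumr; apply: eq_bigr => i _; rewrite scalerA.
elim/big_rec: _ => // i x _ hx; apply: hD => //; apply: hZ; apply: hst.
by apply: mem_nth.
Qed.

Lemma inspan_SymU (U : {vspace V}) m s p :
  (forall y : P, y \in s -> SymU U m y) -> inspan s p -> SymU U m p.
Proof.
move=> hs [c ->]; split.
  rewrite rpred_sum // => i _; apply: rpredZ; apply: (hs _ (mem_nth _ _)).1.
  by [].
apply: inK_sum => i; apply: inKZ; exact: (hs _ (mem_nth _ (ltn_ord i))).2.
Qed.

End Spans.

Section SFF.
Variable k : fieldType.
Variables n d : nat.
Hypothesis hchar : forall p : nat, p \in [pchar k] -> ~~ (p %| (d.+1)`!)%N.
Local Notation P := {mpoly k[n]}.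
Local Notation V := 'rV[k]_n.
Implicit Types (u v c x : V) (p q : P) (s t : seq P).

Lemma dim_decomp (U W : {vspace V}) : vdecomp U W -> (\dim U + \dim W)%N = n.
Proof.
move=> [hs hc]; rewrite -dimv_sum_cap hs hc dimv0 addn0 dimvf.
by rewrite /dim /= mul1n.
Qed.

Lemma pp_of_vdecomp (U W : {vspace V}) : vdecomp U W ->
  projpair U W (daddv_pi W U) (daddv_pi U W).
Proof.
move=> [hs hc].
have hc' : (W :&: U = 0)%VS by rewrite capvC.
have hadd : forall x, daddv_pi W U x + daddv_pi U W x = x.
  by move=> x; apply: daddv_pi_add => //; rewrite addvC hs memvf.
split; split.
- by move=> a x y; rewrite linearP.
- by move=> a x y; rewrite linearP.
- exact: hadd.
- by move=> x; rewrite daddv_pi_proj.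
- by move=> x; rewrite daddv_pi_proj.
- by move=> x; apply: memv_pi.
- by move=> x; apply: memv_pi.
- move=> u hu; have := hadd u; rewrite (daddv_pi_id hc hu) => /(canRL (addrK u)).
  by rewrite subrr.
- move=> w hw; have := hadd w; rewrite (daddv_pi_id hc' hw) => /(canRL (addKr w)).
  by rewrite addNr.
Qed.

Definition hsplit (U W : {vspace V}) (f : P) :=
  forall c, exists g h, [/\ SymU U d g, SymU W d h & Dv c f = g + h].

Lemma key_general (U W : {vspace V}) A B (f : P) : (1 < d)%N ->
  projpair U W A B -> hsplit U W f -> hsplit W U f ->
  forall c, (forall w, w \in W -> dot w c = 0) -> inK U (Dv c f).
Proof.
move=> hd pp hUW hWU c hc.
have [g [h [hg hh he]]] := hUW c.
suff h0 : h = 0 by rewrite he h0 addr0; exact: hg.2.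
have [[hA hB hAB _ _] _] := pp.
apply: (@zero_partials k n d hchar d); first by rewrite (ltnW hd) /= leqW.
  exact: hh.1.
move=> j; rewrite -Dv_ev (ev_colv j hA hB hAB) Dv_addv.
rewrite [Dv (colv B j) h](Dv_ann hh.2); last first.
  by move=> w hw; apply: pp_ann (projpair_sym pp) hw.
rewrite addr0.
set c' := colv A j.
have hc' : forall u, u \in U -> dot u c' = 0 by move=> u hu; apply: pp_ann pp hu.
have [g' [h' [hg' hh' he']]] := hUW c'.
have e1 : Dv c' (Dv c f) = Dv c' h by rewrite he DvD (Dv_ann hg.2 hc') add0r.
have e2 : Dv c (Dv c' f) = Dv c g' by rewrite he' DvD (Dv_ann hh'.2 hc) addr0.
have := Dv_comm c' c f; rewrite e1 e2 => e.
apply: (@pp_inter k n d hchar U W A B d.-1 _ pp).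
- by case: d hd => [|[|dd]] //= _; rewrite ltnS leqW // leqW.
- exact: Dv_homog hh.1.
- by rewrite e; apply: inK_Dv; exact: hg'.2.
- exact: inK_Dv hh.2.
Qed.

Lemma SF_general (f : P) : (1 < d)%N -> f \is d.+1.-homog -> lin_free (grad f) ->
  space_direct_sum false d (grad f) n -> form_direct_sum d.+1 f.
Proof.
move=> hd hf hfree [U [W [[hvd hU hW] [b1 [b2 [_ _ hb1 hb2 [_ hss _]]]]]]].
have pp := pp_of_vdecomp hvd.
have hUW : hsplit U W f.
  move=> c; have := (hss (Dv c f)).1 (inspan_grad_Dv f c).
  move/inspan_cat => [g [h [hg hh he]]]; exists g, h; split => //.
    exact: inspan_SymU hb1 hg.
  exact: inspan_SymU hb2 hh.
have hWU : hsplit W U f.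
  by move=> c; have [g [h [hg hh he]]] := hUW c; exists h, g; rewrite addrC.
apply: (@pp_form k n d hchar U W _ _ f pp hf hU hW (lin_free_grad_inj hfree)).
- move=> j; apply: (key_general hd (projpair_sym pp) hWU hUW).
  by move=> u hu; apply: pp_ann pp hu.
- move=> j; apply: (key_general hd pp hUW hWU).
  by move=> w hw; apply: pp_ann (projpair_sym pp) hw.
Qed.

End SFF.

Section D1.
Variable k : fieldType.
Variables n : nat.
Hypothesis hchar : forall p : nat, p \in [pchar k] -> ~~ (p %| (1.+1)`!)%N.
Local Notation P := {mpoly k[n]}.
Local Notation V := 'rV[k]_n.
Implicit Types (u v c x : V) (p q : P) (s t : seq P).

Lemma ev_neq0 (i : 'I_n) : ev i != 0 :> V.
Proof.
apply/negP => /eqP h; have := congr1 (fun r : V => r 0 i) h.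
by rewrite !mxE !eqxx /= => /eqP; rewrite oner_eq0.
Qed.

Lemma exists_nonisotropic (f : P) : (0 < n)%N -> f \is 2.-homog ->
  (forall c, Dv c f = 0 -> c = 0) -> exists v, Dv v (Dv v f) != 0.
Proof.
move=> hn hf hinj.
case: (boolP [exists i : 'I_n, mderiv i (mderiv i f) != 0]) => [/existsP [i hi]|/existsPn h1].
  by exists (ev i); rewrite !Dv_ev.
case: (boolP [exists i : 'I_n, exists j : 'I_n, mderiv i (mderiv j f) != 0]) =>
   [/existsP [i /existsP [j hij]] | /existsPn h2].
  exists (ev i + ev j); rewrite !Dv_addv !DvD !Dv_ev.
  have /negPn/eqP -> := h1 i; have /negPn/eqP -> := h1 j.
  rewrite add0r addr0 mderiv_comm -mulr2n -scaler_nat scaler_eq0 negb_or mderiv_comm hij andbT.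
  by apply: (@natr_nz k 1 hchar 2).
exfalso; pose i0 := Ordinal hn.
have : mderiv i0 f = 0.
  apply: (@zero_partials k n 1 hchar 1) => //; first exact: mderiv_homog hf.
  move=> j; have := h2 j; rewrite negb_exists => /forallP /(_ i0).
  by rewrite negbK => /eqP.
by rewrite -Dv_ev => /hinj; apply/eqP; apply: ev_neq0.
Qed.

Lemma dot_ev (i : 'I_n) v : dot (ev i) v = v 0 i.
Proof.
rewrite /dot (bigD1 i) //= big1 ?addr0; first by rewrite mxE !eqxx mul1r.
by move=> j ji; rewrite mxE eqxx /= (negbTE ji) mul0r.
Qed.

Lemma SF_d1 (f : P) : (1 < n)%N -> f \is 2.-homog ->
  (forall c, Dv c f = 0 -> c = 0) -> form_direct_sum 2 f.
Proof.
move=> hn hf hinj.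
have [v hv] := exists_nonisotropic (ltnW hn) hf hinj.
set l := Dv v f; set q := Dv v l.
have hl : l \is 1.-homog := Dv_homog v hf.
have hq0 : q \is 0.-homog := Dv_homog v hl.
set cq := q@_0%MM.
have hqc : q = cq%:MP := homog0_const hq0.
have cq0 : cq != 0 by apply: contraNneq hv => h; rewrite -/l -/q hqc h mpolyC0.
set lam := \row_i (mderiv i l)@_0%MM.
have hlam : l = linform lam := homog1_linform hl.
have hdot : dot lam v = cq.
  by apply: (can_inj (@mpolyCK n k)); rewrite -Dv_linform -hlam; exact: hqc.
pose B' := fun x : V => (dot x v / cq) *: lam.
pose A' := fun x : V => x - B' x.
have hB'lin : linear B'.
  by move=> a x y; rewrite /B' dotD dotZ mulrDl scalerDl -mulrA scalerA.
have hA'lin : linear A'.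
  by move=> a x y; rewrite /A' hB'lin scalerBr opprD addrACA.
have hdotB : forall x, dot (B' x) v = dot x v.
  by move=> x; rewrite /B' dotZ hdot divfK.
have hdotA : forall x, dot (A' x) v = 0.
  by move=> x; rewrite /A' dotD -scaleN1r dotZ hdotB mulN1r subrr.
have hB'A : forall x, B' (A' x) = 0 by move=> x; rewrite /B' hdotA mul0r scale0r.
set U' := (<[lam]>)%VS.
set W' := (<<[seq A' (ev i) | i <- enum 'I_n]>>)%VS.
have hAW : forall x, A' x \in W'.
  move=> x; rewrite (lin_expand x hA'lin); apply: memv_suml => i _; apply: memvZ.
  by apply: memv_span; apply: map_f; rewrite mem_enum.
have hW0 : forall w, w \in W' -> dot w v = 0.
  move=> w hw; rewrite (coord_span hw) dot_sum big1 // => i _.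
  rewrite dotZ; set X := map_tuple _ _.
  have /mapP [j _ ->] : X`_i \in map (fun i0 : 'I_n => A' (ev i0)) (enum 'I_n).
    by apply: (@mem_nth _ 0 X); rewrite size_tuple.
  by rewrite hdotA mulr0.
have pp : projpair U' W' A' B'.
  split; split => //.
  - by move=> x; rewrite /A' subrK.
  - by move=> x; rewrite {1}/A' hB'A subr0.
  - by move=> x; rewrite {1}/B' hdotB.
  - by move=> x; apply: memvZ; apply: memv_line.
  - by move=> u /vlineP [a ->]; rewrite /A' /B' dotZ hdot mulfK // subrr.
  - by move=> w hw; rewrite /B' hW0 // mul0r scale0r.
have hU' : U' != 0%VS.
  apply/eqP => h; have := memv_line lam; rewrite -/U' h memv0 => /eqP hl0.
  by move: hdot; rewrite hl0 dot0 => /esym/eqP; rewrite (negbTE cq0).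
have hW' : W' != 0%VS.
  apply/eqP => h; have := dim_decomp (pp_vdecomp pp); rewrite h dimv0 addn0.
  rewrite dim_vline => hn'; move: hn; rewrite -hn'; by case: (lam != 0).
have hcolB : forall j, colv B' j = (lam 0 j / cq) *: v.
  move=> j; apply/rowP => i; rewrite !mxE /B' dot_ev; ring.
apply: (@pp_form k n 1 hchar U' W' A' B' f pp hf hU' hW' hinj).
- move=> j.
  set r := Dv (colv A' j) f.
  have hr : r = mderiv j f - (lam 0 j / cq) *: l.
    rewrite -Dv_ev (ev_colv j hA'lin hB'lin (fun x => subrK _ x)) Dv_addv hcolB.
    by rewrite Dv_scalev addrK.
  have hr1 : r \is 1.-homog := Dv_homog _ hf.
  set mu := \row_i (mderiv i r)@_0%MM.
  have hmu : r = linform mu := homog1_linform hr1.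
  have hdmu : dot mu v = 0.
    apply: (can_inj (@mpolyCK n k)); rewrite -Dv_linform -hmu hr DvB DvZ.
    have hq' : Dv v l = cq%:MP := hqc.
    rewrite -mderiv_Dv -/l hq' hlam mderiv_linform.
    by rewrite -mul_mpolyC -mpolyCM divfK // subrr mpolyC0.
  have -> : r = linform (A' mu) by rewrite /A' /B' hdmu mul0r scale0r subr0.
  by apply: inK_linform.
- move=> j; rewrite hcolB Dv_scalev -/l hlam; apply: inKZ.
  by apply: inK_linform; apply: memv_line.
Qed.

End D1.

Section VS.
Variable k : fieldType.
Variables n d : nat.
Local Notation N := n.+1.
Local Notation P := {mpoly k[N]}.
Local Notation V := 'rV[k]_N.
Local Notation vT := (dhomog N k d).
Implicit Types (p q : P) (s t : seq P).

Definition toH p : vT := indhomog d p.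

Lemma toHK p : p \is d.-homog -> val (toH p) = p.
Proof. by move=> h; rewrite /toH /indhomog insubdK. Qed.

Lemma valH (x : vT) : toH (val x) = x.
Proof. by rewrite /toH /indhomog valKd. Qed.

Lemma toH0 : toH 0 = 0.
Proof. by apply: val_inj; rewrite toHK // rpred0. Qed.

Definition homogs s := forall y, y \in s -> y \is d.-homog.

Lemma nth_mapH s i : (i < size s)%N -> (map toH s)`_i = toH s`_i.
Proof. by move=> hi; rewrite (set_nth_default (toH 0)) ?size_map // (nth_map 0). Qed.

Lemma span_exE (X : seq vT) m (e : size X = m) v :
  v \in <<X>>%VS <-> exists c : 'I_m -> k, v = \sum_(i < m) c i *: X`_i.
Proof.
case: m / e; split.
  by move=> hv; exists (fun i => coord (in_tuple X) i v); apply: (coord_span (X := in_tuple X)).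
move=> [c ->]; apply: memv_suml => i _; apply: memvZ; apply: memv_span.
by apply: mem_nth.
Qed.

Lemma free_exE (X : seq vT) m (e : size X = m) :
  free X <-> forall c : 'I_m -> k, \sum_(i < m) c i *: X`_i = 0 -> forall i, c i = 0.
Proof. by case: m / e; split => [/(freeP (X := in_tuple X))|h]; last apply/(freeP (X := in_tuple X)). Qed.

Lemma val_sum I (r : seq I) (F : I -> vT) : val (\sum_(i <- r) F i) = \sum_(i <- r) val (F i).
Proof. by elim/big_rec2: _ => [|i x y _ <-] //. Qed.

Lemma toH_comb s (c : 'I_(size s) -> k) : homogs s ->
  \sum_(i < size s) c i *: (map toH s)`_i = toH (\sum_(i < size s) c i *: s`_i).
Proof.
move=> hs; apply: val_inj; rewrite toHK; last first.
  by rewrite rpred_sum // => i _; rewrite rpredZ // hs // mem_nth.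
rewrite val_sum; apply: eq_bigr => i _ /=.
by rewrite nth_mapH // toHK // hs // mem_nth.
Qed.

Lemma toH_sumZ I (r : seq I) (a : I -> k) (F : I -> P) :
  (forall i, F i \is d.-homog) ->
  toH (\sum_(i <- r) a i *: F i) = \sum_(i <- r) a i *: toH (F i).
Proof.
move=> hF; apply: val_inj; rewrite toHK; last by rewrite rpred_sum // => i _; rewrite rpredZ // hF.
by rewrite val_sum; apply: eq_bigr => i _ /=; rewrite toHK.
Qed.

Lemma T3 s : homogs s -> lin_free s <-> free (map toH s).
Proof.
move=> hs; rewrite (free_exE (size_map toH s)); split.
  move=> hl c; rewrite toH_comb // => h0; apply: hl.
  by rewrite -(toHK (p := \sum_(i < size s) c i *: s`_i)) ?h0 // rpred_sum // => i _;
     rewrite rpredZ // hs // mem_nth.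
move=> hf c h0; apply: hf; by rewrite toH_comb // h0 toH0.
Qed.

Lemma T_inspan s p : homogs s -> inspan s p -> p \is d.-homog /\ toH p \in <<map toH s>>%VS.
Proof.
move=> hs [c ->]; split.
  by rewrite rpred_sum // => i _; rewrite rpredZ // hs // mem_nth.
by rewrite -toH_comb // (span_exE (size_map toH s)); exists c.
Qed.

Lemma T_inspan_inv s p : homogs s -> p \is d.-homog -> toH p \in <<map toH s>>%VS -> inspan s p.
Proof.
move=> hs hp; rewrite (span_exE (size_map toH s)) => [[c hc]]; exists c.
by rewrite -(toHK hp) hc toH_comb // toHK // rpred_sum // => i _; rewrite rpredZ // hs // mem_nth.
Qed.

Lemma T2 s t : homogs s -> homogs t -> same_span s t -> <<map toH s>>%VS = <<map toH t>>%VS.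
Proof.
move=> hs ht hst; apply/eqP; rewrite eqEsubv; apply/andP; split; apply/span_subvP => x /mapP [y hy ->].
  have := (hst y).1 (inspan_mem hy); move/(T_inspan ht) => [_ ->] //.
have := (hst y).2 (inspan_mem hy); move/(T_inspan hs) => [_ ->] //.
Qed.

Lemma T2inv s t : homogs s -> homogs t -> <<map toH s>>%VS = <<map toH t>>%VS -> same_span s t.
Proof.
move=> hs ht e p; split.
  by move/(T_inspan hs) => [hp hin]; apply: T_inspan_inv => //; rewrite -e.
by move/(T_inspan ht) => [hp hin]; apply: T_inspan_inv => //; rewrite e.
Qed.

Lemma grad_homogs (f : P) : f \is d.+1.-homog -> homogs (grad f).
Proof. by move=> hf y /mapP [i _ ->]; apply: mderiv_homog hf. Qed.

Lemma hdim_consequences (f : P) : f \is d.+1.-homog -> span_dim (grad f) N ->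
  \dim <<map toH (grad f)>> = N /\ lin_free (grad f).
Proof.
move=> hf [b [hb hsz hsame]].
have hg := grad_homogs hf.
have hbh : homogs b.
  by move=> y hy; have := (hsame y).1 (inspan_mem hy); move/(T_inspan hg) => [].
have e := T2 hbh hg hsame.
have hd : \dim <<map toH (grad f)>> = N.
  by rewrite -e; move/(T3 hbh): hb => /eqP ->; rewrite size_map.
split => //; apply/(T3 hg); by rewrite /free hd size_map size_grad.
Qed.

End VS.

Section FST.
Variable k : fieldType.
Variables n d : nat.
Local Notation N := n.+1.
Local Notation P := {mpoly k[N]}.
Local Notation V := 'rV[k]_N.
Local Notation vT := (dhomog N k d).
Implicit Types (p q : P) (s t : seq P).

Lemma dim_grad_SymU (U : {vspace V}) (f1 : P) : SymU U d.+1 f1 ->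
  (\dim <<map (@toH k n d) (grad f1)>> <= \dim U)%N.
Proof.
move=> [hh [q1 hq]].
pose H1 := [seq pihomog (@mdeg N) d (mderiv j q1 \mPo tU U) | j <- enum 'I_(\dim U)].
have szH : size H1 = \dim U by rewrite /H1 size_map; apply: size_enum_ord.
have hs : (\dim <<map (@toH k n d) H1>> <= \dim U)%N.
  by apply: leq_trans (dim_span _) _; rewrite size_map szH.
apply: leq_trans hs; apply: dimvS; apply/span_subvP => x /mapP [y /mapP [i _ ->] ->].
have hy : mderiv i f1 = \sum_(j < \dim U) (dot (vbasis U)`_j (ev i)) *: H1`_j.
  rewrite -(pihomog_dE (mderiv_homog i hh)) -Dv_ev hq Dv_comp.
  rewrite raddf_sum /=; apply: eq_bigr => j _.
  rewrite mulrC mul_mpolyC linearZ /= (nth_map j) ?size_enum_ord //.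
  by rewrite nth_ord_enum.
have hH1 : homogs d H1 by move=> z /mapP [j _ ->]; apply: pihomogP.
rewrite hy toH_sumZ; last by move=> j; apply: hH1; apply: mem_nth; rewrite szH.
apply: memv_suml => j _; apply: memvZ; apply: memv_span; apply: map_f.
by apply: mem_nth; rewrite szH.
Qed.

Lemma grad_SymU (U : {vspace V}) (f1 : P) : SymU U d.+1 f1 ->
  forall y, y \in grad f1 -> SymU U d y.
Proof.
move=> [hh hK] y /mapP [i _ ->]; split; first exact: mderiv_homog hh.
by rewrite -Dv_ev; apply: inK_Dv.
Qed.

Lemma span_SymU (U : {vspace V}) (f1 : P) (x : vT) : SymU U d.+1 f1 ->
  x \in <<map (@toH k n d) (grad f1)>>%VS -> SymU U d (val x).
Proof.
move=> h1 hx; apply: (inspan_SymU (grad_SymU h1)).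
apply: (T_inspan_inv (grad_homogs h1.1)); first exact: dhomog_is_dhomog.
by rewrite valH.
Qed.

Lemma map_valH (X : seq vT) : map (@toH k n d) (map val X) = X.
Proof. by rewrite -map_comp map_id_in // => x _ /=; rewrite valH. Qed.

Lemma F_ST (f : P) : f \is d.+1.-homog -> span_dim (grad f) N ->
  form_direct_sum d.+1 f -> space_direct_sum true d (grad f) N.
Proof.
move=> hf hdim [U [W [hvd [f1 [f2 [nz1 nz2 h1 h2 ef]]]]]]; subst f.
have [hdg _] := hdim_consequences hf hdim.
have hU : U != 0%VS.
  by apply: contraNneq nz1 => hU0; apply/eqP; apply: (SymU_dim0 (m := d.+1)) h1 => //; rewrite hU0 dimv0.
have hW : W != 0%VS.
  by apply: contraNneq nz2 => hW0; apply/eqP; apply: (SymU_dim0 (m := d.+1)) h2 => //; rewrite hW0 dimv0.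
set S1 := <<map (@toH k n d) (grad f1)>>%VS.
set S2 := <<map (@toH k n d) (grad f2)>>%VS.
set Sg := <<map (@toH k n d) (grad (f1 + f2))>>%VS.
have hsub : (Sg <= S1 + S2)%VS.
  apply/span_subvP => x /mapP [y /mapP [i hi ->] ->].
  have -> : toH d (mderiv i (f1 + f2)) = toH d (mderiv i f1) + toH d (mderiv i f2).
    have g1 := mderiv_homog i h1.1; have g2 := mderiv_homog i h2.1.
    by apply: val_inj; rewrite /= mderivD !toHK // rpredD.
  by apply: memv_add; apply: memv_span; apply: map_f; apply: map_f.
have d1 := dim_grad_SymU h1; have d2 := dim_grad_SymU h2.
have hUW := dim_decomp hvd.
have dS := dimvS hsub.
have dsum := dimv_sum_cap S1 S2.
rewrite -/S1 in d1; rewrite -/S2 in d2; rewrite -/Sg in hdg.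
have e1 : \dim S1 = \dim U by lia.
have e2 : \dim S2 = \dim W by lia.
have eS : Sg = (S1 + S2)%VS.
  by apply/eqP; rewrite eqEdim hsub /=; lia.
exists U, W; split; first by split.
exists (map val (vbasis S1)), (map val (vbasis S2)); split.
- apply/T3; first by move=> y /mapP [x _ ->]; exact: dhomog_is_dhomog.
  by rewrite map_valH; apply: basis_free (vbasisP S1).
- apply/T3; first by move=> y /mapP [x _ ->]; exact: dhomog_is_dhomog.
  by rewrite map_valH; apply: basis_free (vbasisP S2).
- by move=> y /mapP [x hx ->]; apply: span_SymU h1 _; apply: vbasis_mem.
- by move=> y /mapP [x hx ->]; apply: span_SymU h2 _; apply: vbasis_mem.
split.
- by rewrite !size_map !size_tuple e1 e2 hUW.
- apply: T2inv; first exact: grad_homogs hf.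
    by move=> y; rewrite mem_cat => /orP [] /mapP [x _ ->]; exact: dhomog_is_dhomog.
  rewrite map_cat !map_valH span_cat !(span_basis (vbasisP _)) -/Sg.
  exact: eS.
- by move=> _; rewrite !size_map !size_tuple e1 e2.
Qed.

End FST.

Lemma dim_le_n (k : fieldType) n (U : {vspace 'rV[k]_n}) : (\dim U <= n)%N.
Proof. by have := dimvS (subvf U); rewrite dimvf /dim /= mul1n. Qed.

Lemma SF_n2 (k : fieldType) n (U W : {vspace 'rV[k]_n}) :
  vdecomp U W -> U != 0%VS -> W != 0%VS -> (1 < n)%N.
Proof.
move=> hv hU hW; have := dim_decomp hv.
rewrite -dimv_eq0 in hU; rewrite -dimv_eq0 in hW; lia.
Qed.

Lemma SF_d0 (k : fieldType) n (f : {mpoly k[n]}) : (1 < n)%N -> f \is 1.-homog ->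
  (forall c, Dv c f = 0 -> c = 0) -> False.
Proof.
move=> hn hf hinj.
pose i0 : 'I_n := Ordinal (ltnW hn); pose i1 : 'I_n := Ordinal hn.
have hc : forall i, mderiv i f = ((mderiv i f)@_0%MM)%:MP.
  by move=> i; apply: homog0_const; apply: (mderiv_homog i hf).
set a0 := (mderiv i0 f)@_0%MM; set a1 := (mderiv i1 f)@_0%MM.
have ne : i0 != i1 by [].
have [z0|nz0] := eqVneq a0 0.
  have := hinj (ev i0); rewrite Dv_ev hc -/a0 z0 mpolyC0 => /(_ erefl) /eqP.
  by rewrite (negbTE (@ev_neq0 k n i0)).
have := hinj (a1 *: ev i0 + (- a0) *: ev i1).
rewrite Dv_addv !Dv_scalev !Dv_ev (hc i0) (hc i1) -/a0 -/a1.
rewrite -!mul_mpolyC -!mpolyCM mulrC mulNr mpolyCN subrr => /(_ erefl) h.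
have := congr1 (fun r : 'rV_n => r 0 i1) h; rewrite !mxE !eqxx /=.
rewrite mulr0 add0r mulr1 => /eqP; rewrite oppr_eq0 (negbTE nz0) //.
Qed.

Lemma ST_SF (k : fieldType) n d (G : seq {mpoly k[n]}) :
  space_direct_sum true d G n -> space_direct_sum false d G n.
Proof.
move=> [U [W [h [b1 [b2 [l1 l2 s1 s2 [sz ss _]]]]]]].
by exists U, W; split => //; exists b1, b2; split.
Qed.

Lemma n0_F (k : fieldType) d (f : {mpoly k[0]}) : ~ form_direct_sum d.+1 f.
Proof.
move=> [U [W [_ [f1 [f2 [nz1 _ h1 _ _]]]]]].
have hU : \dim U = 0%N by have := dim_le_n U; lia.
by move: nz1; rewrite (SymU_dim0 hU _ h1) ?eqxx.
Qed.

Lemma n0_SF (k : fieldType) b d (G : seq {mpoly k[0]}) : ~ space_direct_sum b d G 0.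
Proof.
move=> [U [W [[_ hU _] _]]].
by move: hU; rewrite -dimv_eq0; have := dim_le_n U; lia.
Qed.

Unset Implicit Arguments.

Theorem lemma2p2 (k : fieldType) (n d : nat) (f : {mpoly k[n]})
  (hchar : forall p : nat, p \in [pchar k] -> ~~ (p %| (d.+1)`!)%N)
  (hf : f \is (d.+1).-homog)
  (hdim : span_dim (grad f) n) :
  (form_direct_sum d.+1 f <-> space_direct_sum false d (grad f) n) /\
  (space_direct_sum false d (grad f) n <-> space_direct_sum true d (grad f) n).
Proof.
case: n f hf hdim => [|n] f hf hdim.
  split; split => h; exfalso.
  - exact: n0_F h.
  - exact: n0_SF h.
  - exact: n0_SF h.
  - exact: n0_SF h.
have FST := F_ST hf hdim.
have [_ hfree] := hdim_consequences hf hdim.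
have hinj := lin_free_grad_inj hfree.
have SFF : space_direct_sum false d (grad f) n.+1 -> form_direct_sum d.+1 f.
  move=> hs; have [U [W [[hv hU hW] _]]] := hs.
  have hn := SF_n2 hv hU hW.
  case: d hchar hf FST hs => [|[|d]] hchar' hf' _ hs.
  - by exfalso; apply: SF_d0 hn hf' hinj.
  - exact: (@SF_d1 k n.+1 hchar' f hn hf' hinj).
  - exact: (@SF_general k n.+1 d.+2 hchar' f isT hf' hfree hs).
split; split.
- by move=> h; apply: ST_SF; apply: FST.
- exact: SFF.
- by move=> h; apply: FST; apply: SFF.
- exact: ST_SF.
Qed.
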